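(* Let $S$ be an inf-semilattice ordered Cu-semigroup and let $\alpha$ be an action of a finite group $G$ on $S$ by Cu-isomorphisms. Then the fixed-point set $S^\alpha:=\{x\in S:\alpha_g(x)=x\text{ for all }g\in G\}$ is a sub-Cu-semigroup of $S$. Moreover, if $S$ is weakly cancellative (respectively satisfies (O5), (O6), (O7)), then so is (respectively does) $S^\alpha$.
   Context: A Cu-semigroup is a positively ordered commutative monoid satisfying (O1)–(O4): increasing sequences have suprema; each element is the supremum of a $\ll$-increasing sequence; $x'\ll x,y'\ll y\Rightarrow x'+y'\ll x+y$; suprema of increasing sequences are additive. $x\ll y$: whenever $y\le\sup z_n$ for increasing $(z_n)$, $x\le z_m$ for some $m$. A Cu-isomorphism is a bijective monoid map which together with its inverse preserves order, suprema of increasing sequences and $\ll$. Inf-semilattice ordered: any two elements have an infimum $x\wedge y$ and $(x+z)\wedge(y+z)=(x\wedge y)+z$ for all $x,y,z$. Sub-Cu-semigroup: a submonoid that is a Cu-semigroup with the inherited order such that the inclusion preserves order, suprema of increasing sequences and $\ll$. Weakly cancellative: $x+z\ll y+z$ implies $x\ll y$. (O5): if $x+y\le z$, $x'\ll x$, $y'\ll y$ then some $c$ has $y'\ll c$ and $x'+c\le z\le x+c$. (O6): if $x'\ll x\le y+z$ then some $v,w$ have $v\le x,y$, $w\le x,z$, $x'\le v+w$. (O7): if $x'\ll x\le w$, $y'\ll y\le w$ then some $z$ has $x',y'\ll z\le w,x+y$. *)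

(* Defs.v *)
(* All Cu-notions are defined
   relative to a "domain" predicate D : T -> Prop, so that the same
   definitions express both S (D = all of T) and a sub-monoid of S with the
   inherited order (D = the subset). *)
From mathcomp Require Import all_boot fingroup.
Set Implicit Arguments. Unset Strict Implicit. Unset Printing Implicit Defensive.

Section CuDefs.
Variables (T : Type) (le : T -> T -> Prop) (add : T -> T -> T) (zero : T).

Definition fullD : T -> Prop := fun _ => True.

Section Rel.
Variable D : T -> Prop.

Definition incr_in (f : nat -> T) : Prop :=
  (forall n, D (f n)) /\ (forall n, le (f n) (f n.+1)).

Definition is_sup_in (f : nat -> T) (s : T) : Prop :=
  D s /\ (forall n, le (f n) s) /\
  (forall t, D t -> (forall n, le (f n) t) -> le s t).

Definition ll_in (x y : T) : Prop :=
  D x /\ D y /\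
  forall (z : nat -> T) (s : T), incr_in z -> is_sup_in z s -> le y s ->
    exists m, le x (z m).

Definition pom_in : Prop :=
  D zero /\ (forall x y, D x -> D y -> D (add x y)) /\
  (forall x, D x -> le x x) /\
  (forall x y, D x -> D y -> le x y -> le y x -> x = y) /\
  (forall x y z, D x -> D y -> D z -> le x y -> le y z -> le x z) /\
  (forall x y z, D x -> D y -> D z -> add (add x y) z = add x (add y z)) /\
  (forall x y, D x -> D y -> add x y = add y x) /\
  (forall x, D x -> add zero x = x) /\
  (forall x y z, D x -> D y -> D z -> le x y -> le (add x z) (add y z)) /\
  (forall x, D x -> le zero x).

Definition O1_in : Prop :=
  forall f, incr_in f -> exists s, is_sup_in f s.

Definition O2_in : Prop :=
  forall x, D x -> exists f : nat -> T,
    incr_in f /\ (forall n, ll_in (f n) (f n.+1)) /\ is_sup_in f x.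

Definition O3_in : Prop :=
  forall x' x y' y, ll_in x' x -> ll_in y' y -> ll_in (add x' y') (add x y).

Definition O4_in : Prop :=
  forall f g s t, incr_in f -> incr_in g -> is_sup_in f s -> is_sup_in g t ->
    is_sup_in (fun n => add (f n) (g n)) (add s t).

Definition is_Cu_in : Prop := [/\ pom_in, O1_in, O2_in, O3_in & O4_in].

Definition weakly_cancellative_in : Prop :=
  forall x y z, D x -> D y -> D z ->
    ll_in (add x z) (add y z) -> ll_in x y.

Definition O5_in : Prop :=
  forall x y z x' y', D x -> D y -> D z ->
    le (add x y) z -> ll_in x' x -> ll_in y' y ->
    exists c, D c /\ ll_in y' c /\ le (add x' c) z /\ le z (add x c).

Definition O6_in : Prop :=
  forall x' x y z, D y -> D z -> ll_in x' x -> le x (add y z) ->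
    exists v w, D v /\ D w /\ le v x /\ le v y /\ le w x /\ le w z /\
      le x' (add v w).

Definition O7_in : Prop :=
  forall x' x y' y w, D w -> ll_in x' x -> le x w -> ll_in y' y -> le y w ->
    exists z, D z /\ ll_in x' z /\ ll_in y' z /\ le z w /\ le z (add x y).

End Rel.

Definition is_Cu : Prop := is_Cu_in fullD.

Definition is_inf (x y i : T) : Prop :=
  le i x /\ le i y /\ (forall t, le t x -> le t y -> le t i).

Definition inf_semilattice_ordered : Prop :=
  (forall x y, exists i, is_inf x y i) /\
  (forall x y z i j, is_inf x y i -> is_inf (add x z) (add y z) j ->
     j = add i z).

Definition preserves_le_sup_ll (f : T -> T) : Prop :=
  [/\ (forall x y, le x y -> le (f x) (f y)),
      (forall u s, incr_in fullD u -> is_sup_in fullD u s ->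
          is_sup_in fullD (fun n => f (u n)) (f s)) &
      (forall x y, ll_in fullD x y -> ll_in fullD (f x) (f y)) ].

Definition Cu_iso (f : T -> T) : Prop :=
  f zero = zero /\ (forall x y, f (add x y) = add (f x) (f y)) /\
  exists g : T -> T, [/\ cancel f g, cancel g f,
     preserves_le_sup_ll f & preserves_le_sup_ll g].

(* P is a sub-Cu-semigroup of S: a submonoid which is a Cu-semigroup with the
   inherited order such that the inclusion preserves order (automatic),
   suprema of increasing sequences and << *)
Definition sub_Cu (P : T -> Prop) : Prop :=
  [/\ P zero, (forall x y, P x -> P y -> P (add x y)),
      is_Cu_in P,
      (forall u s, incr_in P u -> is_sup_in P u s -> is_sup_in fullD u s) &
      (forall x y, ll_in P x y -> ll_in fullD x y) ].

Definition fixed_points (gT : finGroupType) (alpha : gT -> T -> T) : T -> Prop :=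
  fun x => forall g : gT, alpha g x = x.

End CuDefs.

Definition Cu_action (T : Type) (le : T -> T -> Prop) (add : T -> T -> T)
  (zero : T) (gT : finGroupType) (alpha : gT -> T -> T) : Prop :=
  [/\ (forall x, alpha 1%g x = x),
      (forall g h x, alpha (g * h)%g x = alpha g (alpha h x)) &
      (forall g, Cu_iso le add zero (alpha g)) ].

(* Main.v *)
From Stdlib Require Import ClassicalEpsilon.
Require Import Defs.
From mathcomp Require Import all_boot fingroup.
Set Implicit Arguments. Unset Strict Implicit. Unset Printing Implicit Defensive.

Section Proof7.
Variables (T : Type) (le : T -> T -> Prop) (add : T -> T -> T) (zero : T)
  (gT : finGroupType) (alpha : gT -> T -> T).
Hypothesis HCu : is_Cu le add zero.
Hypothesis Hinf : inf_semilattice_ordered le add.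
Hypothesis Hact : Cu_action le add zero alpha.

Local Notation F := (fullD (T:=T)).
Local Notation ll := (ll_in le F).
Local Notation P := (fixed_points alpha).

Lemma pomF : pom_in le add zero F. Proof. by case: HCu. Qed.
Lemma le_refl x : le x x.
Proof. case: pomF => _ [_ [H _]]; exact: H x I. Qed.
Lemma le_anti x y : le x y -> le y x -> x = y.
Proof. case: pomF => _ [_ [_ [H _]]]; exact: H x y I I. Qed.
Lemma le_trans x y z : le x y -> le y z -> le x z.
Proof. case: pomF => _ [_ [_ [_ [H _]]]]; exact: H x y z I I I. Qed.
Lemma addC x y : add x y = add y x.
Proof. case: pomF => _ [_ [_ [_ [_ [_ [H _]]]]]]; exact: H x y I I. Qed.
Lemma le_addr x y z : le x y -> le (add x z) (add y z).
Proof. case: pomF => _ [_ [_ [_ [_ [_ [_ [_ [H _]]]]]]]]; exact: H x y z I I I. Qed.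
Lemma le_add2 a b c d : le a b -> le c d -> le (add a c) (add b d).
Proof.
move=> h1 h2; apply: le_trans (le_addr c h1) _.
rewrite (addC b c) (addC b d); exact: le_addr.
Qed.

Lemma act1 x : alpha 1 x = x. Proof. by case: Hact. Qed.
Lemma actM g h x : alpha (g * h) x = alpha g (alpha h x). Proof. by case: Hact. Qed.
Lemma isoP g : Cu_iso le add zero (alpha g). Proof. by case: Hact. Qed.
Lemma act_le g x y : le x y -> le (alpha g x) (alpha g y).
Proof. case: (isoP g) => _ [_ [h [_ _ [H _ _] _]]]; exact: H. Qed.
Lemma act_sup g u s : incr_in le F u -> is_sup_in le F u s ->
  is_sup_in le F (fun n => alpha g (u n)) (alpha g s).
Proof. case: (isoP g) => _ [_ [h [_ _ [_ H _] _]]]; exact: H. Qed.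
Lemma act0 g : alpha g zero = zero. Proof. by case: (isoP g). Qed.
Lemma actD g x y : alpha g (add x y) = add (alpha g x) (alpha g y).
Proof. by case: (isoP g) => _ [H _]. Qed.
Lemma act_inv' g x : alpha g (alpha g^-1 x) = x.
Proof. by rewrite -actM mulgV act1. Qed.

Lemma fixed_of_le a : (forall g, le (alpha g a) a) -> P a.
Proof.
move=> H g; apply: le_anti (H g) _.
rewrite -{1}(act_inv' g a); apply: act_le; exact: H.
Qed.

Lemma sup_uniq u s s' : is_sup_in le F u s -> is_sup_in le F u s' -> s = s'.
Proof.
case=> _ [H1 H2] [_ [H1' H2']]; apply: le_anti.
  exact: H2 s' I H1'.
exact: H2' s I H1.
Qed.

Lemma sup_ext D f f' s : (forall n, f n = f' n) -> is_sup_in le D f s -> is_sup_in le D f' s.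
Proof.
move=> E [Ds [H1 H2]]; split=> //; split.
  by move=> n; rewrite -E.
move=> t Dt Ht; apply: (H2 t Dt) => n; rewrite E; exact: Ht.
Qed.

Lemma incr_mono D u n k : incr_in le D u -> n <= k -> le (u n) (u k).
Proof.
move=> [_ Hu] /subnK <-; elim: (k - n) => [|j IH]; first by rewrite add0n; exact: le_refl.
rewrite addSn; exact: le_trans IH (Hu _).
Qed.

Lemma ll_le x y : ll x y -> le x y.
Proof.
case=> _ [_ H].
have Hi : incr_in le F (fun _ : nat => y) := conj (fun _ => I) (fun _ => le_refl y).
have Hs : is_sup_in le F (fun _ : nat => y) y :=
  conj I (conj (fun _ => le_refl y) (fun t _ Ht => Ht 0)).
by have [m Hm] := H _ _ Hi Hs (le_refl y).
Qed.

Lemma ll_trans a b c d : le a b -> ll b c -> le c d -> ll a d.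
Proof.
move=> hab [_ [_ H]] hcd; split; first exact I; split; first exact I.
move=> z s Hz Hs Hds.
have [m Hm] := H z s Hz Hs (le_trans hcd Hds).
by exists m; apply: le_trans hab Hm.
Qed.

Definition meet x y : T :=
  proj1_sig (constructive_indefinite_description _ (Hinf.1 x y)).
Lemma meetP x y : is_inf le x y (meet x y).
Proof. exact: proj2_sig (constructive_indefinite_description _ (Hinf.1 x y)). Qed.
Lemma meet_l x y : le (meet x y) x. Proof. exact: (meetP x y).1. Qed.
Lemma meet_r x y : le (meet x y) y. Proof. exact: (meetP x y).2.1. Qed.
Lemma meet_glb t x y : le t x -> le t y -> le t (meet x y).
Proof. exact: (meetP x y).2.2. Qed.
Lemma meet_addl x y z : meet (add z x) (add z y) = add z (meet x y).
Proof.
rewrite !(addC z); exact: Hinf.2 x y z _ _ (meetP x y) (meetP _ _).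
Qed.

Lemma P_meet x y : P x -> P y -> P (meet x y).
Proof.
move=> Px Py; apply: fixed_of_le => g; apply: meet_glb.
  apply: le_trans (act_le g (meet_l x y)) _; rewrite Px; exact: le_refl.
apply: le_trans (act_le g (meet_r x y)) _; rewrite Py; exact: le_refl.
Qed.

Definition mlist (l : seq gT) x := foldr (fun g acc => meet (alpha g x) acc) x l.
Definition m x := mlist (enum gT) x.

Lemma mlist_le l x : le (mlist l x) x /\ forall g, g \in l -> le (mlist l x) (alpha g x).
Proof.
elim: l => [|h l [IH1 IH2]] /=.
  by split; [exact: le_refl| move=> g; rewrite in_nil].
split; first exact: le_trans (meet_r _ _) IH1.
move=> g; rewrite inE => /orP [/eqP ->|Hg]; first exact: meet_l.
exact: le_trans (meet_r _ _) (IH2 g Hg).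
Qed.

Lemma mlist_glb l x t : le t x -> (forall g, g \in l -> le t (alpha g x)) ->
  le t (mlist l x).
Proof.
move=> Hx; elim: l => [|h l IH] H //=.
apply: meet_glb; first by apply: H; rewrite inE eqxx.
apply: IH => g Hg; apply: H; by rewrite inE Hg orbT.
Qed.

Lemma mlist_addl l x c t : le t (add x c) ->
  (forall g, g \in l -> le t (add x (alpha g c))) -> le t (add x (mlist l c)).
Proof.
move=> Hx; elim: l => [|h l IH] H //=.
rewrite -meet_addl; apply: meet_glb; first by apply: H; rewrite inE eqxx.
apply: IH => g Hg; apply: H; by rewrite inE Hg orbT.
Qed.

Lemma m_le x g : le (m x) (alpha g x).
Proof. apply: (mlist_le _ x).2; by rewrite mem_enum. Qed.
Lemma m_le_self x : le (m x) x. Proof. exact: (mlist_le _ x).1. Qed.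
Lemma m_glb x t : (forall g, le t (alpha g x)) -> le t (m x).
Proof.
move=> H; apply: mlist_glb => [|g _]; last exact: H.
have := H 1%g; by rewrite act1.
Qed.
Lemma m_fixed x : P (m x).
Proof.
apply: fixed_of_le => h; apply: m_glb => g.
apply: le_trans (act_le h (m_le x (h^-1 * g))) _.
rewrite -actM mulKVg; exact: le_refl.
Qed.
Lemma m_mono x y : le x y -> le (m x) (m y).
Proof. move=> H; apply: m_glb => g; exact: le_trans (m_le x g) (act_le g H). Qed.

Lemma P0 : P zero. Proof. move=> g; exact: act0. Qed.
Lemma Padd x y : P x -> P y -> P (add x y).
Proof. move=> Px Py g; by rewrite actD Px Py. Qed.

Lemma eventually_all (Q : gT -> nat -> Prop) :
  (forall g n k, n <= k -> Q g n -> Q g k) -> (forall g, exists n, Q g n) ->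
  exists N, forall g, Q g N.
Proof.
move=> Hm He.
have Hl : forall l : seq gT, exists N, forall g, g \in l -> Q g N.
  elim=> [|h l [N IH]]; first by exists 0 => g; rewrite in_nil.
  have [n Hn] := He h.
  exists (maxn n N) => g; rewrite inE => /orP [/eqP ->|Hg].
    exact: Hm (leq_maxl _ _) Hn.
  exact: Hm (leq_maxr _ _) (IH g Hg).
have [N HN] := Hl (enum gT).
exists N => g; apply: HN; by rewrite mem_enum.
Qed.

Lemma incrPF u : incr_in le P u -> incr_in le F u.
Proof. move=> H; exact: conj (fun _ => I) H.2. Qed.

Lemma supP_ex u : incr_in le P u -> exists s, is_sup_in le F u s /\ P s.
Proof.
move=> Hu; have HuF := incrPF Hu.
case: HCu => _ O1 _ _ _; have [s Hs] := O1 u HuF.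
exists s; split=> // g.
have H := act_sup g HuF Hs.
apply: sup_uniq (sup_ext _ H) Hs => n; exact: Hu.1 n g.
Qed.

Lemma supPF u s : incr_in le P u -> is_sup_in le P u s -> is_sup_in le F u s.
Proof.
move=> Hu [Ps [Hs1 Hs2]]; have [s0 [Hs0 P0']] := supP_ex Hu.
have Hs0' := Hs0; case: Hs0' => _ [H01 H02].
have -> // : s = s0.
apply: le_anti; first exact: Hs2 s0 P0' H01.
exact: H02 s I Hs1.
Qed.

Lemma supFP u s : incr_in le P u -> is_sup_in le F u s -> is_sup_in le P u s.
Proof.
move=> Hu Hs; have [s0 [Hs0 P0']] := supP_ex Hu.
rewrite (sup_uniq Hs Hs0); case: Hs0 => _ [H1 H2]; split=> //; split=> //.
move=> t _ Ht; exact: H2 t I Ht.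
Qed.

Lemma llFP x y : P x -> P y -> ll x y -> ll_in le P x y.
Proof.
move=> Px Py [_ [_ H]]; split=> //; split=> // z s Hz Hs Hys.
exact: H z s (incrPF Hz) (supPF Hz Hs) Hys.
Qed.

Lemma llPF x y : ll_in le P x y -> ll x y.
Proof.
move=> [Px [Py H]]; split; first exact I; split; first exact I.
move=> z s Hz Hs Hys.
pose w n := m (z n).
have Hw : incr_in le P w := conj (fun n => m_fixed (z n)) (fun n => m_mono (Hz.2 n)).
have [W [HW PW]] := supP_ex Hw.
have HyW : le y W.
  case: HCu => _ _ O2 _ _; have [f [Hf [Hfll Hfs]]] := O2 y I.
  case: Hfs => _ [Hf1 Hf2]; apply: (Hf2 W I) => k.
  have Hk : ll (f k) y := ll_trans (le_refl _) (Hfll k) (Hf1 k.+1).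
  have [N HN] : exists N, forall g, le (f k) (alpha g (z N)).
    apply: (@eventually_all (fun g n => le (f k) (alpha g (z n)))).
      move=> g n n' Hnn' H'; exact: le_trans H' (act_le g (incr_mono Hz Hnn')).
    move=> g; case: Hk => _ [_ Hk'].
    have Hle : le y (alpha g s).
      rewrite -{1}(Py g). exact (act_le g Hys).
    exact: Hk' (fun n => alpha g (z n)) (alpha g s)
      (conj (fun _ => I) (fun n => act_le g (Hz.2 n))) (act_sup g Hz Hs) Hle.
  apply: le_trans (m_glb HN) _; exact: HW.2.1 N.
have [k Hk] := H w W Hw (supFP Hw HW) HyW.
by exists k; exact: le_trans Hk (m_le_self _).
Qed.

Lemma O2P : O2_in le P.
Proof.
move=> x Px.
case: HCu => _ _ O2 _ _; have [f [Hf [Hfll Hfs]]] := O2 x I.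
have Hfs' := Hfs; case: Hfs' => _ [Hf1 Hf2].
have Hex : forall k, exists N, k <= N /\ le (f k) (m (f N)).
  move=> k.
  have Hk : ll (f k) x := ll_trans (le_refl _) (Hfll k) (Hf1 k.+1).
  have [N HN] : exists N, forall g, k <= N /\ le (f k) (alpha g (f N)).
    apply: (@eventually_all (fun g n => k <= n /\ le (f k) (alpha g (f n)))).
      move=> g n n' Hn [Hkn Hle]; split; first exact: leq_trans Hkn Hn.
      exact: le_trans Hle (act_le g (incr_mono Hf Hn)).
    move=> g; case: Hk => _ [_ Hk'].
    have Hle : le x (alpha g x) by rewrite (Px g); exact: le_refl.
    have [n Hn] := Hk' (fun n => alpha g (f n)) (alpha g x)
      (conj (fun _ => I) (fun n => act_le g (Hf.2 n))) (act_sup g Hf Hfs) Hle.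
    exists (maxn n k); split; first exact: leq_maxr.
    exact: le_trans Hn (act_le g (incr_mono Hf (leq_maxl _ _))).
  exists N; split; first exact: (HN 1%g).1.
  apply: m_glb => g; exact: (HN g).2.
have [phi Hphi] : exists phi : nat -> nat, forall k, k <= phi k /\ le (f k) (m (f (phi k))).
  exists (fun k => proj1_sig (constructive_indefinite_description _ (Hex k))) => k.
  exact: proj2_sig (constructive_indefinite_description _ (Hex k)).
pose idx i := iter i (fun j => phi j.+1) 0.
have idxS i : idx i.+1 = phi (idx i).+1 by [].
have idx_ge i : i <= idx i.
  elim: i => [|i IH] //; rewrite idxS; apply: leq_trans _ (Hphi _).1.
  by rewrite ltnS.
pose y i := m (f (idx i)).
have Py i : P (y i) := m_fixed _.
have Hyll i : ll (y i) (y i.+1).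
  apply: ll_trans (m_le_self _) (Hfll (idx i)) _.
  rewrite /y idxS; exact: (Hphi _).2.
have Hy : incr_in le P y := conj Py (fun i => ll_le (Hyll i)).
exists y; split; first exact Hy.
split; first by move=> i; exact: llFP (Py i) (Py i.+1) (Hyll i).
split; first exact Px.
split; first by move=> i; exact: le_trans (m_le_self _) (Hf1 _).
move=> t Pt Ht; apply: (Hf2 t I) => k.
have Hk : k <= (idx k).+1 := leq_trans (idx_ge k) (leqnSn _).
apply: le_trans (incr_mono Hf Hk) _.
apply: le_trans _ (Ht k.+1).
rewrite /y idxS; exact: (Hphi _).2.
Qed.

Lemma pomP : pom_in le add zero P.
Proof.
case: pomF => _ [_ [Hr [Ha [Ht [HA [HC [H0 [Hle H0le]]]]]]]].
split; first exact: P0. split; first exact: Padd.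
split; first by move=> x _; exact: Hr x I.
split; first by move=> x y _ _; exact: Ha x y I I.
split; first by move=> x y z _ _ _; exact: Ht x y z I I I.
split; first by move=> x y z _ _ _; exact: HA x y z I I I.
split; first by move=> x y _ _; exact: HC x y I I.
split; first by move=> x _; exact: H0 x I.
split; first by move=> x y z _ _ _; exact: Hle x y z I I I.
by move=> x _; exact: H0le x I.
Qed.

Lemma interp a b : ll_in le P a b -> exists c, P c /\ ll a c /\ ll c b.
Proof.
move=> Hab; have Pb := Hab.2.1; have [h [Hh [Hhll Hhs]]] := O2P Pb.
have HsF := supPF Hh Hhs.
have [n Hn] := (llPF Hab).2.2 h b (incrPF Hh) HsF (le_refl b).
exists (h n.+1); split; first exact: Hh.1.
split; first exact: ll_trans Hn (llPF (Hhll n)) (le_refl _).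
case: HsF => _ [H1 _]; exact: ll_trans (le_refl _) (llPF (Hhll n.+1)) (H1 _).
Qed.

Lemma main :
  [/\ sub_Cu le add zero P,
      weakly_cancellative_in le add F -> weakly_cancellative_in le add P,
      O5_in le add F -> O5_in le add P,
      O6_in le add F -> O6_in le add P &
      O7_in le add F -> O7_in le add P].
Proof.
split.
- split.
  + exact: P0.
  + exact: Padd.
  + split.
    * exact: pomP.
    * move=> u Hu; have [s [Hs Ps]] := supP_ex Hu; exists s; exact: supFP Hu Hs.
    * exact: O2P.
    * move=> x' x y' y Hx Hy.
      apply: llFP (Padd Hx.1 Hy.1) (Padd Hx.2.1 Hy.2.1) _.
      case: HCu => _ _ _ O3 _; exact: O3 _ _ _ _ (llPF Hx) (llPF Hy).
    * move=> f g s t Hf Hg Hs Ht.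
      have Hfg : incr_in le P (fun n => add (f n) (g n)) :=
        conj (fun n => Padd (Hf.1 n) (Hg.1 n)) (fun n => le_add2 (Hf.2 n) (Hg.2 n)).
      apply: supFP Hfg _.
      case: HCu => _ _ _ _ O4.
      exact: O4 f g s t (incrPF Hf) (incrPF Hg) (supPF Hf Hs) (supPF Hg Ht).
  + exact: supPF.
  + exact: llPF.
- move=> WC x y z Px Py Pz Hxz; apply: llFP Px Py _.
  exact: WC x y z I I I (llPF Hxz).
- move=> O5 x y z x' y' Px Py Pz Hxyz Hx' Hy'.
  have [y'' [Py'' [H1 H2]]] := interp Hy'.
  have [c [_ [Hc [Hc1 Hc2]]]] := O5 x y z x' y'' I I I Hxyz (llPF Hx') H2.
  exists (m c); split; first exact: m_fixed.
  split.
    apply: llFP (Hy'.1) (m_fixed c) _; apply: ll_trans (le_refl _) H1 _.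
    apply: m_glb => g; rewrite -(Py'' g); exact (act_le g (ll_le Hc)).
  split; first exact: le_trans (le_add2 (le_refl x') (m_le_self c)) Hc1.
  apply: mlist_addl => // g _.
  rewrite -(Pz g) -(Px g) -actD; exact (act_le g Hc2).
- move=> O6 x' x y z Py Pz Hx' Hxyz.
  have Px := Hx'.2.1.
  have [v [w [_ [_ [Hvx [Hvy [Hwx [Hwz Hx'vw]]]]]]]] := O6 x' x y z I I (llPF Hx') Hxyz.
  exists (meet x y), (meet x z).
  split; first exact: P_meet. split; first exact: P_meet.
  split; first exact: meet_l. split; first exact: meet_r.
  split; first exact: meet_l. split; first exact: meet_r.
  exact: le_trans Hx'vw (le_add2 (meet_glb Hvx Hvy) (meet_glb Hwx Hwz)).
- move=> O7 x' x y' y w Pw Hx' Hxw Hy' Hyw.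
  have [z [_ [Hz1 [Hz2 [Hzw Hzxy]]]]] := O7 x' x y' y w I (llPF Hx') Hxw (llPF Hy') Hyw.
  have Px := Hx'.2.1; have Py := Hy'.2.1.
  have Pm : P (meet w (add x y)) := P_meet Pw (Padd Px Py).
  have Hzm : le z (meet w (add x y)) := meet_glb Hzw Hzxy.
  exists (meet w (add x y)); split; first exact Pm.
  split; first exact: llFP Hx'.1 Pm (ll_trans (le_refl _) Hz1 Hzm).
  split; first exact: llFP Hy'.1 Pm (ll_trans (le_refl _) Hz2 Hzm).
  split; [exact: meet_l | exact: meet_r].
Qed.

End Proof7.

Theorem lemma7p7 (T : Type) (le : T -> T -> Prop) (add : T -> T -> T)
  (zero : T) (gT : finGroupType) (alpha : gT -> T -> T) :
  is_Cu le add zero ->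
  inf_semilattice_ordered le add ->
  Cu_action le add zero alpha ->
  let P := fixed_points alpha in
  [/\ sub_Cu le add zero P,
      weakly_cancellative_in le add (fullD (T:=T)) ->
        weakly_cancellative_in le add P,
      O5_in le add (fullD (T:=T)) -> O5_in le add P,
      O6_in le add (fullD (T:=T)) -> O6_in le add P &
      O7_in le add (fullD (T:=T)) -> O7_in le add P].
Proof. move=> H1 H2 H3; exact: main H1 H2 H3. Qed.
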